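(* Consider the two-stage decision problem described in the context, with random uncertainty $u$ and probability level $\varepsilon\in(0,1)$. Let $$O := \min_{x \in \mathcal{X},\, \eta}\Big\{ f(x) + \eta \;:\; \Pr\Big[ \min_{y \in \mathcal{Y}(x, u)} h(y) \leq \eta \Big] \geq 1 - \varepsilon\Big\},$$ and, for a set $\mathcal{U}$, $$O_{\mathcal{U}} := \min_{x \in \mathcal{X}} \Big\{ f(x) + \max_{u \in \mathcal{U}} \min_{y \in \mathcal{Y}(x, u)} h(y) \Big\}.$$ Suppose $(x^*, \eta^* )$ is an optimal solution of the first problem (with optimal value $O$) and $x_{\mathcal{U}}^*$ is an optimal solution of the second problem (with optimal value $O_{\mathcal{U}}$). For any $x \in \mathcal{X}$ let $$O_x := f(x) + \min \Big\{ \eta ~\Big|~ \Pr \Big[ \min_{y \in \mathcal{Y}(x, u)} h(y) \leq \eta \Big] \geq 1 - \varepsilon \Big\}.$$ Then $O = O_{x^*} \leq O_{x_{\mathcal{U}}^*} \leq O_{\mathcal{U}}$ whenever $\mathcal{U}$ satisfies $\Pr[u \in \mathcal{U}] \geq 1 - \varepsilon$. Moreover, for $$\mathcal{U}^* := \Big\{ u ~\Big|~ \min_{y \in \mathcal{Y}(x^*, u)} h(y) \leq \eta^* \Big\}$$ one has $\Pr[u \in \mathcal{U}^*] \geq 1 - \varepsilon$ and $O = O_{\mathcal{U}^*}$.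
   Context: $\mathcal{X}$ is the feasible set of first-stage decisions $x$, and $f$ is a real-valued first-stage cost function on $\mathcal X$. $u$ is a random vector (the uncertainty) with probability measure $\Pr$. For each $x$ and each realization $u$, $\mathcal{Y}(x,u)$ is the feasible set of second-stage decisions $y$, and $h$ is the real-valued second-stage cost function; the minimum over an empty set is $+\infty$. The minima in the definitions of $O_x$ are assumed attained. *)

(* Defs.v *)
From HB Require Import structures.
From mathcomp Require Import all_boot all_order all_algebra.
From mathcomp Require Import all_classical all_reals.
From mathcomp Require Import ereal measure probability.
Set Implicit Arguments. Unset Strict Implicit. Unset Printing Implicit Defensive.
Import Order.TTheory GRing.Theory Num.Theory.
Local Open Scope classical_set_scope.
Local Open Scope ring_scope.
Local Open Scope ereal_scope.

Section TwoStage.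
Context {R : realType} {Xt Yt : Type} {d : measure_display}
  {T : measurableType d}.

(* second-stage value  min_{y in Y(x,u)} h(y)  (+oo on an empty set) *)
Definition second_stage (Y : Xt -> T -> set Yt) (h : Yt -> R) (x : Xt) (u : T)
  : \bar R := ereal_inf [set (h y)%:E | y in Y x u].

Definition chance_event (Y : Xt -> T -> set Yt) (h : Yt -> R) (x : Xt) (eta : R)
  : set T := [set u | second_stage Y h x u <= eta%:E].

Definition chance_feasible (P : probability T R) (eps : R)
  (Y : Xt -> T -> set Yt) (h : Yt -> R) (x : Xt) (eta : R) : Prop :=
  P (chance_event Y h x eta) >= (1 - eps)%:E.

Definition O_x (P : probability T R) (eps : R) (f : Xt -> R)
  (Y : Xt -> T -> set Yt) (h : Yt -> R) (x : Xt) : \bar R :=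
  (f x)%:E + ereal_inf [set eta%:E | eta in chance_feasible P eps Y h x].

Definition robust_obj (f : Xt -> R) (Y : Xt -> T -> set Yt) (h : Yt -> R)
  (U : set T) (x : Xt) : \bar R :=
  (f x)%:E + ereal_sup [set second_stage Y h x u | u in U].

Definition O_U (X : set Xt) (f : Xt -> R) (Y : Xt -> T -> set Yt) (h : Yt -> R)
  (U : set T) : \bar R :=
  ereal_inf [set robust_obj f Y h U x | x in X].

End TwoStage.

(* Main.v *)
Require Import Defs.
From HB Require Import structures.
From mathcomp Require Import all_boot all_order all_algebra.
From mathcomp Require Import all_classical all_reals.
From mathcomp Require Import ereal measure probability.
From mathcomp Require Import lra.
Import Order.TTheory GRing.Theory Num.Theory.
Local Open Scope classical_set_scope.
Local Open Scope ring_scope.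
Local Open Scope ereal_scope.

Theorem lemma1 (R : realType) (Xt Yt : Type) (d : measure_display)
  (T : measurableType d) (P : probability T R) (eps : R)
  (X : set Xt) (f : Xt -> R) (Y : Xt -> T -> set Yt) (h : Yt -> R)
  (heps : (0 < eps < 1)%R)
  (* the inner minima over y are attained (when the feasible set is nonempty) *)
  (hYmin : forall x u, X x -> Y x u !=set0 ->
     exists2 y, Y x u y & forall y', Y x u y' -> (h y <= h y')%R)
  (* the minima over eta in the definition of O_x are attained *)
  (hetamin : forall x, X x -> chance_feasible P eps Y h x !=set0 ->
     exists2 eta, chance_feasible P eps Y h x eta &
       forall eta', chance_feasible P eps Y h x eta' -> (eta <= eta')%R)
  (* the chance events are events *)
  (hmeas : forall x eta, X x -> measurable (chance_event Y h x eta))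
  (xstar : Xt) (etastar : R)
  (* (xstar, etastar) is an optimal solution of the chance-constrained problem *)
  (hxs : X xstar) (hfeas : chance_feasible P eps Y h xstar etastar)
  (hopt : forall x eta, X x -> chance_feasible P eps Y h x eta ->
     (f xstar + etastar <= f x + eta)%R) :
  (* part 1 *)
  ((f xstar + etastar)%:E = O_x P eps f Y h xstar /\
   forall (U : set T) (xU : Xt), measurable U -> P U >= (1 - eps)%:E ->
     X xU ->
     (forall x, X x -> robust_obj f Y h U xU <= robust_obj f Y h U x) ->
     O_x P eps f Y h xstar <= O_x P eps f Y h xU /\
     O_x P eps f Y h xU <= O_U X f Y h U)
  /\
  (* part 2 *)
  (P (chance_event Y h xstar etastar) >= (1 - eps)%:E /\
   (f xstar + etastar)%:E = O_U X f Y h (chance_event Y h xstar etastar)).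
Proof.
have ss_gt : forall x u, X x -> -oo < second_stage Y h x u.
  move=> x u Xx; rewrite /second_stage; case: (pselect (Y x u !=set0)) => [ne|e].
    have [y Yy ymin] := hYmin x u Xx ne.
    apply: (@lt_le_trans _ _ (h y)%:E); first exact: ltNyr.
    apply: le_ereal_inf_tmp => _ [y' Yy' <-]; rewrite lee_fin; exact: ymin.
  have -> : [set (h y)%:E | y in Y x u] = set0.
    apply/seteqP; split => // z [y Yy _]; apply: e; by exists y.
  by rewrite ereal_inf0.
have L2 : forall x, X x -> (f xstar + etastar)%:E <= O_x P eps f Y h x.
  move=> x Xx; rewrite /O_x.
  have : ((f xstar + etastar) - f x)%:E <=
      ereal_inf [set eta%:E | eta in chance_feasible P eps Y h x].
    apply: le_ereal_inf_tmp => _ [e fe <-]; rewrite lee_fin.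
    have := hopt x e Xx fe; lra.
  case: (ereal_inf _) => [r||] //=; rewrite ?lee_fin => H.
    lra.
  by rewrite addey ?leey.
have L1 : forall x U, X x -> measurable U -> (1 - eps)%:E <= P U ->
    O_x P eps f Y h x <= robust_obj f Y h U x.
  move=> x U Xx mU PU; rewrite /robust_obj /O_x.
  have [u Uu] : U !=set0.
    apply/set0P/negP => /eqP U0; move: PU; rewrite U0 measure0 lee_fin; lra.
  have ub := @ereal_sup_ubound R [set second_stage Y h x u | u in U].
  have := ub _ (ex_intro2 _ _ u Uu erefl).
  have := ss_gt x u Xx.
  case E : (ereal_sup _) => [r||] //=.
  - move=> _ _; apply: leeD2l; apply: ereal_inf_lbound; exists r => //.
    rewrite /chance_feasible; apply: (le_trans PU); apply: le_measure.
    + by rewrite inE.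
    + by rewrite inE; apply: hmeas.
    + move=> v Uv; rewrite /chance_event /=; rewrite -E; apply: ub.
      by exists v.
  - by move=> _ _; rewrite leey.
  - by move=> lt le; move: (lt_le_trans lt le); rewrite ltxx.
have Oxs : (f xstar + etastar)%:E = O_x P eps f Y h xstar.
  apply/eqP; rewrite eq_le L2 //=; rewrite /O_x EFinD; apply: leeD2l.
  by apply: ereal_inf_lbound; exists etastar.
split; [split => // U xU mU PU XxU xUopt; split|split=> //].
- by rewrite -Oxs L2.
- apply: (le_trans (L1 xU U XxU mU PU)).
  by apply: le_ereal_inf_tmp => _ [x Xx <-]; apply: xUopt.
- apply/eqP; rewrite eq_le; apply/andP; split.
    apply: le_ereal_inf_tmp => _ [x Xx <-].
    apply: (le_trans (L2 x Xx)); apply: L1 => //; exact: hmeas.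
  apply: (@le_trans _ _ (robust_obj f Y h (chance_event Y h xstar etastar) xstar)).
    by apply: ereal_inf_lbound; exists xstar.
  rewrite /robust_obj EFinD; apply: leeD2l.
  by apply: ub_ereal_sup => _ [u Uu <-].
Qed.
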